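(* Let $q$ be a prime power and let $n\ge 3$ be an odd integer. Let $f(x)$ be an irreducible monic polynomial of degree $n$ over $\mathbb{F}_{q^2}$. The following are equivalent: (1) $f(x)$ is self-conjugate-reciprocal; (2) $\mathrm{ord}(f(x))\in D_n$; (3) $f(x)=f_\beta(x):=\prod_{i=0}^{n-1}(x-\beta^{q^{2i}})$ for some primitive $d$-th root of unity $\beta$ with $d\in D_n$.
   Context: $D_n$ denotes the set of all positive divisors of $q^n+1$ that do not divide $q^k+1$ for any integer $0\le k<n$. For $f(x)\in\mathbb{F}_{q^2}[x]$ of degree $m$ with $f(0)\neq0$, the reciprocal is $f^*(x)=x^m f(0)^{-1}f(1/x)$, the conjugate of $g(x)=\sum g_ix^i$ is $\overline{g(x)}=\sum g_i^q x^i$, and the conjugate-reciprocal is $f^\dagger(x)=\overline{f^*(x)}$; $f$ is self-conjugate-reciprocal if $f=f^\dagger$. The order $\mathrm{ord}(f(x))$ is the smallest positive integer $s$ such that $f(x)$ divides $x^s-1$. *)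

(* Defs.v *)
From HB Require Import structures.
From mathcomp Require Import all_boot all_order all_algebra all_field.
Set Implicit Arguments. Unset Strict Implicit. Unset Printing Implicit Defensive.
Import GRing.Theory.
Local Open Scope ring_scope.

Definition inD (q n d : nat) : bool :=
  [&& (0 < d)%N, (d %| q ^ n + 1)%N & [forall k : 'I_n, ~~ (d %| q ^ k + 1)%N]].

(* Reciprocal f^*(x) = x^m f(0)^{-1} f(1/x), m = deg f. *)
Definition recip (F : fieldType) (f : {poly F}) : {poly F} :=
  (f`_0)^-1 *: \poly_(i < size f) f`_(size f - 1 - i).

Definition conjp (F : fieldType) (q : nat) (g : {poly F}) : {poly F} :=
  \poly_(i < size g) (g`_i ^+ q).

Definition conj_recip (F : fieldType) (q : nat) (f : {poly F}) : {poly F} :=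
  conjp q (recip f).

Definition self_conj_recip (F : fieldType) (q : nat) (f : {poly F}) : Prop :=
  f`_0 != 0 /\ f = conj_recip q f.

Definition is_ord (F : fieldType) (f : {poly F}) (s : nat) : Prop :=
  (0 < s)%N /\ f %| 'X^s - 1 /\
  forall t : nat, (0 < t)%N -> f %| 'X^t - 1 -> (s <= t)%N.

(* Main.v *)
Require Import Defs.
From HB Require Import structures.
From mathcomp Require Import all_boot all_order all_algebra all_field.
From mathcomp Require Import zify.
Set Implicit Arguments. Unset Strict Implicit. Unset Printing Implicit Defensive.
Import GRing.Theory.
Local Open Scope ring_scope.

Section Frob.
Variables (R : fieldType) (p : nat) (Hp : p \in [pchar R]).

Lemma frobB m (x y : R) : (x - y) ^+ (p ^ m) = x ^+ (p ^ m) - y ^+ (p ^ m).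
Proof.
elim: m => [|m IH]; first by rewrite !expn0 !expr1.
by rewrite expnSr !exprM IH -!(pFrobenius_autE Hp) rmorphB.
Qed.

Definition frob m : R -> R := fun x => x ^+ (p ^ m).

Lemma frob_zmod m : zmod_morphism (frob m).
Proof. by move=> x y; rewrite /frob frobB. Qed.

Lemma frob_mon m : monoid_morphism (frob m).
Proof. by rewrite /frob; split=> [|x y]; rewrite ?exprMn ?expr1n. Qed.

Definition frobR m : {rmorphism R -> R} :=
  HB.pack (frob m) (GRing.isZmodMorphism.Build _ _ _ (frob_zmod m))
    (GRing.isMonoidMorphism.Build _ _ _ (frob_mon m)).

Lemma frobRE m x : frobR m x = x ^+ (p ^ m).
Proof. by []. Qed.
End Frob.

Lemma irr_dvd (F : fieldType) (L : fieldExtType F) (f g : {poly F}) (b : L) :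
  irreducible_poly f -> root (map_poly (in_alg L) f) b ->
  root (map_poly (in_alg L) g) b -> f %| g.
Proof.
move=> irr rf rg.
have hd : gcdp f g %| f by apply: dvdp_gcdl.
have: root (map_poly (in_alg L) (gcdp f g)) b by rewrite gcdp_map root_gcd rf rg.
case: (irredp_XsubCP irr hd) => [h1|hf] hr.
  move: h1; rewrite -size_poly_eq1 => /eqP hs.
  move: hs; rewrite -(size_map_poly (in_alg L)).
  move/eqP=> hs'; case: (size_poly1P _ hs') => c c0 ec; move: hr; rewrite ec rootC.
  by move=> h0; move: c0; rewrite h0.
by rewrite -(eqp_dvdl _ hf) dvdp_gcdr.
Qed.

Lemma map_poly_poly (F : fieldType) (L : fieldExtType F) m (E : nat -> F) :
  map_poly (in_alg L) (\poly_(i < m) E i) = \poly_(i < m) (E i)%:A.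
Proof.
apply/polyP => j; rewrite coef_map !coef_poly /=.
by case: ifP => _ //; rewrite scale0r.
Qed.

Lemma size_top (R : nzRingType) (r : {poly R}) m :
  (size r <= m.+1)%N -> r`_m != 0 -> size r = m.+1.
Proof.
move=> h1 h2; apply/eqP; rewrite eqn_leq h1 /= ltnNge; apply/negP => h3.
by move: h2; rewrite nth_default // eqxx.
Qed.

Lemma root_prod_ord (R : idomainType) m (G : nat -> R) x :
  root (\prod_(i < m) ('X - (G i)%:P)) x -> exists2 i, (i < m)%N & x = G i.
Proof.
elim: m => [|m IH]; first by rewrite big_ord0 rootC oner_eq0.
rewrite big_ord_recr /= rootM => /orP [/IH [i hi ->]|].
  by exists i => //; apply: ltnW.
by rewrite root_XsubC => /eqP ->; exists m.
Qed.

Section Main.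
Variables (F : finFieldType) (q p e : nat).
Hypotheses (pr : prime p) (e0 : (0 < e)%N) (qE : q = (p ^ e)%N) (cardF : #|F| = (q ^ 2)%N).
Variables (n : nat) (f : {poly F}).
Hypotheses (n3 : (3 <= n)%N) (nodd : odd n) (irr : irreducible_poly f)
  (mon : f \is monic) (sz : size f = n.+1).

Lemma QE : (p ^ (e * 2) = q ^ 2)%N.
Proof. by rewrite qE expnM. Qed.

Lemma pcharF : p \in [pchar F].
Proof. by apply: (card_finPcharP _ pr); rewrite cardF -QE. Qed.

Lemma q_gt1 : (1 < q)%N.
Proof. by rewrite qE -(expn0 p) ltn_exp2l ?prime_gt1. Qed.

Lemma f0_neq0 : f`_0 != 0.
Proof.
apply/negP => /eqP h0.
have : root f 0 by rewrite /root horner_coef0 h0.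
rewrite root_factor_theorem => hd.
case: (irredp_XsubCP irr hd) => /eqp_size; rewrite size_XsubC ?size_poly1 // sz.
by move=> [] h; move: n3; rewrite -h.
Qed.

Lemma recip_n : (recip f)`_n = 1.
Proof.
rewrite /recip coefZ coef_poly sz ltnSn.
have -> : (n.+1 - 1 - n = 0)%N by lia.
by rewrite mulVf // f0_neq0.
Qed.

Lemma recip_size : size (recip f) = n.+1.
Proof.
apply: size_top; last by rewrite recip_n oner_neq0.
apply: leq_trans (size_scale_leq _ _) _; rewrite -sz; exact: size_poly.
Qed.

Lemma cr_n : (conj_recip q f)`_n = 1.
Proof. by rewrite /conj_recip /conjp coef_poly recip_size ltnSn recip_n expr1n. Qed.

Lemma cr_size : size (conj_recip q f) = n.+1.
Proof.
apply: size_top; last by rewrite cr_n oner_neq0.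
rewrite -recip_size; exact: size_poly.
Qed.

Lemma cr_monic : conj_recip q f \is monic.
Proof. by rewrite monicE lead_coefE cr_size /= cr_n. Qed.

Section InL.
Variables (L : fieldExtType F) (b : L).
Hypothesis rb : root (map_poly (in_alg L) f) b.
Local Notation mf := (map_poly (in_alg L) f).
Local Notation Q := (q ^ 2)%N.

Lemma pL : p \in [pchar L].
Proof. by rewrite pchar_lalg pcharF. Qed.

Local Notation phi := (frobR pL (e * 2)).

Lemma phiE x : phi x = x ^+ Q.
Proof. by rewrite frobRE QE. Qed.

Lemma phi_alg (a : F) : phi (a%:A) = a%:A.
Proof. by rewrite phiE -[in RHS](expf_card a) cardF -!in_algE rmorphXn. Qed.

Lemma map_phi_f : map_poly phi mf = mf.
Proof.
by rewrite -map_poly_comp; apply: eq_map_poly => a /=; exact: phi_alg.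
Qed.

Lemma root_phi x : root mf x -> root mf (x ^+ Q).
Proof.
move=> /rootP hx; apply/rootP; rewrite -phiE -map_phi_f horner_map hx.
by rewrite rmorph0.
Qed.

Lemma root_iter i : root mf (b ^+ (Q ^ i)).
Proof.
elim: i => [|i IH]; first by rewrite expn0 expr1.
by rewrite expnSr exprM; apply: root_phi.
Qed.

Lemma expQ_inj i (x y : L) : x ^+ (Q ^ i) = y ^+ (Q ^ i) -> x = y.
Proof.
have h : (Q ^ i = p ^ (e * 2 * i))%N by rewrite expnM QE.
rewrite h -!(frobRE pL) => /fmorph_inj //.
Qed.

Lemma fermat_ex : exists m, (0 < m)%N && (b ^+ (Q ^ m) == b).
Proof.
pose K := <<1; b>>%AS.
exists (\dim K); rewrite adim_gt0 /=.
have := Fermat's_little_theorem K b.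
by rewrite memv_adjoin cardF => <-.
Qed.

Definition korb := ex_minn fermat_ex.

Lemma korbP : [/\ (0 < korb)%N, b ^+ (Q ^ korb) = b &
   forall j, (0 < j)%N -> b ^+ (Q ^ j) = b -> (korb <= j)%N].
Proof.
rewrite /korb; case: ex_minnP => m /andP[m0 /eqP hm] hmin; split=> //.
by move=> j j0 hj; apply: hmin; rewrite j0 hj eqxx.
Qed.


Lemma orb_inj i j : (i < korb)%N -> (j < korb)%N ->
  b ^+ (Q ^ i) = b ^+ (Q ^ j) -> i = j.
Proof.
have [_ _ kmin] := korbP.
wlog ij : i j / (i <= j)%N.
  move=> H hi hj hij; case: (leqP i j) => [le|lt]; first exact: H.
  by apply/esym; apply: H => //; apply: ltnW.
move=> hi hj hij.
have [d0|d0] := posnP (j - i); first by apply/eqP; rewrite eqn_leq ij -subn_eq0 d0.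
have hb : b = b ^+ (Q ^ (j - i)).
  apply: (@expQ_inj i); rewrite hij -exprM -expnD subnK //.
have := kmin _ d0 (esym hb); move: hj; lia.
Qed.

Lemma mf_neq0 : mf != 0.
Proof. by rewrite -size_poly_eq0 size_map_poly sz. Qed.

Lemma korb_le : (korb <= n)%N.
Proof.
have := @max_poly_roots _ mf [seq b ^+ (Q ^ i) | i <- iota 0 korb] mf_neq0.
rewrite size_map size_iota size_map_poly sz ltnS; apply.
  by apply/allP => x /mapP [i _ ->]; apply: root_iter.
rewrite map_inj_in_uniq ?iota_uniq // => i j; rewrite !mem_iota /= !add0n.
exact: orb_inj.
Qed.

Lemma korb_ge : (n <= korb)%N.
Proof.
have [k0 kfix kmin] := korbP.
pose h i := 'X - (b ^+ (Q ^ i))%:P.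
pose g := \prod_(i < korb) h i.
have hg : map_poly phi g = g.
  rewrite /g rmorph_prod.
  have -> : \prod_(i < korb) map_poly phi (h i) = \prod_(i < korb) h i.+1.
    apply: eq_bigr => i _; rewrite /h map_polyXsubC phiE -exprM -expnSr //.
  move: kfix; case: korb k0 => // k _ kfix.
  rewrite big_ord_recr big_ord_recl /= mulrC /h kfix expn0 expr1.
  by congr (_ * _); apply: eq_bigr => i _.
have g1 : g \is a polyOver 1%VS.
  apply/polyOverP => i.
  rewrite (Fermat's_little_theorem 1%AS) dimv1 expn1 cardF -phiE.
  by rewrite -coef_map hg.
case/polyOver1P: g1 => g0 hg0.
have rg : root (map_poly (in_alg L) g0) b.
  rewrite -hg0 /g (bigD1 (Ordinal k0)) //= rootM; apply/orP; left.
  by rewrite /h root_XsubC expn0 expr1.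
have g00 : g0 != 0.
  apply/negP => /eqP g00; move: hg0; rewrite g00 rmorph0 => /eqP.
  rewrite -size_poly_eq0 /g size_prod_XsubC. by [].
have := dvdp_leq g00 (irr_dvd irr rb rg).
rewrite sz -(size_map_poly (in_alg L)) -hg0 /g.
rewrite size_prod_XsubC [index_enum _]unlock -enumT size_enum_ord.
by [].
Qed.


Lemma korb_eq : korb = n.
Proof. by apply/eqP; rewrite eqn_leq korb_le korb_ge. Qed.

Lemma orbit_fix : b ^+ (Q ^ n) = b.
Proof. by have [_ + _] := korbP; rewrite korb_eq. Qed.

Lemma orbit_min j : (0 < j)%N -> (j < n)%N -> b ^+ (Q ^ j) != b.
Proof.
move=> j0 jn; apply/eqP => hj; have [_ _ +] := korbP; move/(_ j j0 hj).
by rewrite korb_eq; move: jn; lia.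
Qed.

Lemma b_neq0 : b != 0.
Proof.
apply/negP => /eqP b0; move: rb; rewrite b0 /root horner_coef0 coef_map /=.
rewrite -in_algE fmorph_eq0; apply/negP; exact: f0_neq0.
Qed.

Lemma prod_f : mf = \prod_(i < n) ('X - (b ^+ (q ^ (2 * i)))%:P).
Proof.
have hd : \prod_(z <- [seq b ^+ (Q ^ i) | i <- iota 0 n]) ('X - z%:P) %| mf.
  apply: uniq_roots_dvdp; first by apply/allP => x /mapP [i _ ->]; apply: root_iter.
  rewrite uniq_rootsE map_inj_in_uniq ?iota_uniq // => i j; rewrite !mem_iota /= !add0n.
  by rewrite -korb_eq; exact: orb_inj.
move: hd; rewrite big_map.
have -> : \prod_(i <- iota 0 n) ('X - (b ^+ (Q ^ i))%:P) =
   \prod_(i < n) ('X - (b ^+ (q ^ (2 * i)))%:P).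
  rewrite -(subn0 n) -/(index_iota 0 n) big_mkord subn0.
  by apply: eq_bigr => i _; rewrite expnM.
move=> hd; apply/eqP; rewrite eq_sym -eqp_monic ?monic_prod_XsubC ?map_monic //.
rewrite -dvdp_size_eqp // size_prod_XsubC size_map_poly sz.
by rewrite [index_enum _]unlock -enumT size_enum_ord.
Qed.

Lemma dvd_ord s : (f %| 'X^s - 1) = (b ^+ s == 1).
Proof.
have hm : map_poly (in_alg L) ('X^s - 1) = 'X^s - 1.
  by rewrite raddfB /= map_polyXn rmorph1.
have hr : root ('X^s - 1) b = (b ^+ s == 1).
  by rewrite rootE !hornerE subr_eq0.
apply/idP/idP => [h|h].
  rewrite -hr; apply: root_dvdp rb; by rewrite -hm dvdp_map.
by apply: (irr_dvd irr rb); rewrite hm hr.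
Qed.


Lemma recip_root : root (map_poly (in_alg L) (recip f)) b^-1.
Proof.
rewrite /recip map_polyZ /root hornerZ mulf_eq0; apply/orP; right.
rewrite map_poly_poly horner_poly sz.
have hb := b_neq0.
have : b ^+ n * (\sum_(i < n.+1) (f`_(n.+1 - 1 - i))%:A * b^-1 ^+ i) = 0.
  rewrite mulr_sumr.
  transitivity (\sum_(i < n.+1) (f`_(n - i))%:A * b ^+ (n - i)).
    apply: eq_bigr => i _.
    have -> : (n.+1 - 1 - i = n - i)%N by lia.
    have hi : (i <= n)%N by rewrite -ltnS.
    rewrite mulrCA; congr (_ * _).
    rewrite -{1}(subnK hi) exprD -mulrA -exprMn mulfV // expr1n mulr1 //.
  rewrite (reindex_inj rev_ord_inj) /=.
  under eq_bigr => i _ do rewrite subSS (@subKn i n (ltn_ord i)).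
  apply: eq_trans (rootP rb); rewrite horner_coef size_map_poly sz.
  by apply: eq_bigr => i _; rewrite coef_map.
by move/eqP; rewrite mulf_eq0 expf_eq0 (negbTE hb) andbF /=.
Qed.

Lemma conjp_horner (h : {poly F}) (x : L) :
  (map_poly (in_alg L) (conjp q h)).[x ^+ q] = ((map_poly (in_alg L) h).[x]) ^+ q.
Proof.
have hq : forall y : L, y ^+ q = frobR pL e y by move=> y; rewrite frobRE qE.
rewrite /conjp map_poly_poly horner_poly horner_coef size_map_poly.
rewrite [in RHS]hq rmorph_sum; apply: eq_bigr => i _.
rewrite rmorphM rmorphXn !frobRE -qE coef_map /= exprAC; congr (_ * _).
by rewrite -!in_algE rmorphXn.
Qed.

Lemma scr_root : root (map_poly (in_alg L) (conj_recip q f)) ((b^-1) ^+ q).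
Proof.
rewrite /conj_recip /root conjp_horner; move/rootP: recip_root => ->.
by rewrite expr0n; case: q q_gt1.
Qed.


Lemma expq_inj (x y : L) : x ^+ q = y ^+ q -> x = y.
Proof. by rewrite qE -!(frobRE pL) => /fmorph_inj. Qed.

Lemma fixQ_dvd m : b ^+ (Q ^ m) = b -> (n %| m)%N.
Proof.
elim/ltn_ind: m => m IH hm.
case: (ltnP m n) => hmn.
  case: (posnP m) => [->|m0]; first exact: dvdn0.
  by move: (orbit_min m0 hmn); rewrite hm eqxx.
have h : b ^+ (Q ^ (m - n)) = b.
  by apply: (@expQ_inj n); rewrite orbit_fix -exprM -expnD subnK.
have := IH (m - n)%N ltac:(lia) h => h1.
by rewrite -(subnK hmn) dvdn_add.
Qed.

Lemma inv_fix j : b ^+ (q ^ j) = b^-1 -> b ^+ (Q ^ j) = b.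
Proof.
move=> h; have -> : (Q ^ j = q ^ j * q ^ j)%N.
  by rewrite -expnM -expnD; congr expn; lia.
by rewrite exprM h exprVn h invrK.
Qed.

Lemma inv_of_one s : b ^+ (s + 1) = 1 -> b ^+ s = b^-1.
Proof.
move=> h; have : b ^+ s * b = 1 by rewrite -exprSr -addn1 h.
by move/(congr1 (fun y => y / b)); rewrite mulfK ?b_neq0 // mul1r.
Qed.

Lemma one_of_inv s : b ^+ s = b^-1 -> b ^+ (s + 1) = 1.
Proof. by move=> h; rewrite addn1 exprSr h mulVf ?b_neq0. Qed.

Lemma key_inD d : d.-primitive_root b ->
  (exists j, [/\ odd j, (j < 2 * n)%N & b ^+ (q ^ j) = b^-1]) -> inD q n d.
Proof.
move=> pd [j [oj jn hj]].
have /dvdnP [c hc] := fixQ_dvd (inv_fix hj).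
have c1 : c = 1%N.
  move: oj jn; rewrite hc oddM => /andP [oc _] jn.
  have c2 : (c < 2)%N by nia.
  by case: c c2 oc {hc jn} => [|[|c]].
have hn : b ^+ (q ^ n) = b^-1 by rewrite hc c1 mul1n in hj.
rewrite /inD (prim_order_gt0 pd) /=; apply/andP; split.
  by rewrite (prim_order_dvd pd); apply/eqP; apply: one_of_inv.
apply/forallP => k; apply/negP; rewrite (prim_order_dvd pd) => /eqP hk.
have hk' := inv_of_one hk.
have /dvdnP [c' hc'] := fixQ_dvd (inv_fix hk').
have k0 : (k : nat) = 0%N.
  have := ltn_ord k; rewrite hc'; case: c' {hc'} => // c'; nia.
move: hk'; rewrite k0 expn0 expr1 => hbi.
have e2 : b ^+ 2 = 1 by rewrite expr2 {1}hbi mulVf ?b_neq0.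
have hQ : b ^+ Q = b.
  case: (boolP (odd Q)) => oQ.
    by rewrite -(odd_double_half Q) oQ -muln2 mulnC exprD exprM e2 expr1n mulr1 expr1.
  have h1 : b = 1.
    rewrite -[LHS]orbit_fix -(odd_double_half (Q ^ n)) oddX (negbTE oQ) orbF.
    have -> : (n == 0%N) = false by apply/negbTE; rewrite -lt0n; lia.
    by rewrite add0n -muln2 mulnC exprM e2 expr1n.
  by rewrite h1 expr1n.
by have := orbit_min (isT : (0 < 1)%N) ltac:(lia); rewrite expn1 hQ eqxx.
Qed.

Lemma inD_root d : d.-primitive_root b -> inD q n d -> root mf ((b^-1) ^+ q).
Proof.
move=> pd /and3P [_ hd _]; move: hd; rewrite (prim_order_dvd pd) => /eqP h.
have hn := inv_of_one h.
rewrite -hn -exprM -expnSr.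
have -> : (n.+1 = 2 * (n./2).+1)%N.
  by have := odd_double_half n; rewrite nodd -muln2 /=; lia.
rewrite expnM; exact: root_iter.
Qed.

Lemma scr_to_j : self_conj_recip q f ->
  exists j, [/\ odd j, (j < 2 * n)%N & b ^+ (q ^ j) = b^-1].
Proof.
case=> _ hf.
have := scr_root; rewrite -hf prod_f => /(@root_prod_ord _ n (fun i => b ^+ (q ^ (2 * i)))) [i hi hx].
case: i hi hx => [|i] hi hx.
  exists 1%N; split => //; first by lia.
  by move: hx; rewrite muln0 expn0 expr1 exprVn expn1 => h; rewrite -[in RHS]h invrK.
exists (2 * i + 1)%N; split; first by rewrite oddD oddM.
  by lia.
apply: expq_inj; rewrite hx -exprM -expnSr; congr (_ ^+ (q ^ _)); lia.
Qed.

Lemma scr_iff d : d.-primitive_root b -> self_conj_recip q f <-> inD q n d.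
Proof.
move=> pd; split => [h | h]; first exact: key_inD (scr_to_j h).
split; first exact: f0_neq0.
have hd : f %| conj_recip q f by apply: (irr_dvd irr (inD_root pd h) scr_root).
apply/eqP; rewrite -eqp_monic ?cr_monic // -dvdp_size_eqp // cr_size sz //.
Qed.

Lemma prim_of_ord d : is_ord f d -> d.-primitive_root b.
Proof.
case=> d0 [hd hmin].
have bd : b ^+ d = 1 by apply/eqP; rewrite -dvd_ord.
have [m pm md] := prim_order_exists d0 bd.
have m0 := prim_order_gt0 pm.
have h2 : (d <= m)%N.
  have hh := hmin m m0; apply: hh; by rewrite dvd_ord (prim_expr_order pm).
have h1 := dvdn_leq d0 md.
by have -> : d = m by apply/eqP; rewrite eqn_leq h2 h1.
Qed.

Lemma exists_ord : exists d, is_ord f d.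
Proof.
have hex : exists s, (0 < s)%N && (f %| 'X^s - 1).
  exists (Q ^ n).-1.
  have hQ : (1 < Q ^ n)%N.
    apply: (@leq_trans (Q ^ 1)); first by rewrite expn1; have := q_gt1; nia.
    by apply: leq_pexp2l; [have := q_gt1; nia | lia].
  rewrite -ltnS prednK ?hQ /=; last by lia.
  rewrite dvd_ord; apply/eqP; apply: (mulIf b_neq0).
  by rewrite mul1r -exprSr prednK ?orbit_fix //; lia.
exists (ex_minn hex); case: ex_minnP => m /andP [m0 hm] hmin; split => //.
by split => // t t0 ht; apply: hmin; rewrite t0 ht.
Qed.

End InL.

Lemma is_ord_uniq s t : is_ord f s -> is_ord f t -> s = t.
Proof.
case=> s0 [hs ms] [t0 [ht mt]]; apply/eqP; rewrite eqn_leq.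
by rewrite (ms t t0 ht) (mt s s0 hs).
Qed.

Lemma ord_of_prim (L : fieldExtType F) (b : L) d :
  root (map_poly (in_alg L) f) b -> d.-primitive_root b -> is_ord f d.
Proof.
move=> rb pd; split; first exact: prim_order_gt0 pd.
split; first by rewrite (dvd_ord rb) (prim_expr_order pd).
move=> t t0; rewrite (dvd_ord rb) -(prim_order_dvd pd); exact: dvdn_leq.
Qed.

Lemma main_sec :
  [/\ (self_conj_recip q f <-> exists s : nat, is_ord f s /\ inD q n s),
      ((exists s : nat, is_ord f s /\ inD q n s) <->
        exists (L : fieldExtType F) (beta : L) (d : nat),
          [/\ inD q n d, d.-primitive_root beta &
              map_poly (in_alg L) f =
                \prod_(i < n) ('X - (beta ^+ (q ^ (2 * i)))%:P)])
    & (self_conj_recip q f <->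
        exists (L : fieldExtType F) (beta : L) (d : nat),
          [/\ inD q n d, d.-primitive_root beta &
              map_poly (in_alg L) f =
                \prod_(i < n) ('X - (beta ^+ (q ^ (2 * i)))%:P)])].
Proof.
have nz : f != 0 by rewrite -size_poly_eq0 sz.
have [L0 [rs hrs _]] := FinSplittingFieldFor nz.
have hsz := eqp_size hrs; rewrite size_map_poly sz size_prod_XsubC in hsz.
case: rs hrs hsz => [|b0 rs] hrs hsz; first by move: hsz => /= [] h; move: n3; rewrite h.
have rb0 : root (map_poly (in_alg L0) f) b0.
  by rewrite (eqp_root hrs) root_prod_XsubC mem_head.
have [d0 hd0] := exists_ord rb0.
have pd0 := prim_of_ord rb0 hd0.
have h1 := scr_iff rb0 pd0.
have H2 : (exists s : nat, is_ord f s /\ inD q n s) <-> inD q n d0.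
  split; first by case=> s [hs hD]; rewrite -(is_ord_uniq hs hd0).
  by move=> hD; exists d0.
have n0 : (0 < n)%N by lia.
have H3 : (exists (L : fieldExtType F) (beta : L) (d : nat),
          [/\ inD q n d, d.-primitive_root beta &
              map_poly (in_alg L) f =
                \prod_(i < n) ('X - (beta ^+ (q ^ (2 * i)))%:P)]) <-> inD q n d0.
  split.
    case=> L [b [d [hD hp hprod]]].
    have rb : root (map_poly (in_alg L) f) b.
      rewrite hprod (bigD1 (@Ordinal n 0 n0)) //= rootM root_XsubC.
      by rewrite muln0 expn0 expr1 eqxx.
    by rewrite -(is_ord_uniq (ord_of_prim rb hp) hd0).
  move=> hD; exists L0, b0, d0; split => //; exact: prod_f rb0.
split.
- by rewrite H2.
- by rewrite H2 H3.
- by rewrite H3.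
Qed.

End Main.

Unset Implicit Arguments.

Theorem mainTheorem9 (q : nat) (F : finFieldType) (n : nat) (f : {poly F}) :
  (exists p k : nat, [/\ prime p, (0 < k)%N & q = (p ^ k)%N]) ->
  #|F| = (q ^ 2)%N ->
  (3 <= n)%N -> odd n ->
  irreducible_poly f -> f \is monic -> size f = n.+1 ->
  [/\ (self_conj_recip q f <-> exists s : nat, is_ord f s /\ inD q n s),
      ((exists s : nat, is_ord f s /\ inD q n s) <->
        exists (L : fieldExtType F) (beta : L) (d : nat),
          [/\ inD q n d, d.-primitive_root beta &
              map_poly (in_alg L) f =
                \prod_(i < n) ('X - (beta ^+ (q ^ (2 * i)))%:P)])
    & (self_conj_recip q f <->
        exists (L : fieldExtType F) (beta : L) (d : nat),
          [/\ inD q n d, d.-primitive_root beta &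
              map_poly (in_alg L) f =
                \prod_(i < n) ('X - (beta ^+ (q ^ (2 * i)))%:P)])].
Proof.
move=> [p [k [pr k0 qE]]] cardF n3 nodd irr mon sz.
exact: (main_sec pr k0 qE cardF n3 nodd irr mon sz).
Qed.
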